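(* Let $\mathbb{C}[X]^*$ be the linear dual of $\mathbb{C}[X]$ with the convolution product $(f*g)(X^n)=\sum_{k=0}^n\binom{n}{k}f(X^k)g(X^{n-k})$, let $I=\{f\in\mathbb{C}[X]^*\mid f(1)=0\}$, let $\mathbb{C}[X]^{\circ}$ be the subalgebra of those $f\in\mathbb{C}[X]^*$ vanishing on some non-zero ideal of $\mathbb{C}[X]$ (the linearly recursive sequences), and $J=I\cap\mathbb{C}[X]^{\circ}$. Let $\widehat{\iota}:\varprojlim_n\mathbb{C}[X]^\circ/J^n\to\varprojlim_n\mathbb{C}[X]^*/I^n\cong\mathbb{C}[X]^*$ be the map induced by the inclusion. Then $\widehat{\iota}$ is a split surjection which is not injective; consequently the $J$-adic topology on $\mathbb{C}[X]^\circ$ is strictly finer than (and not equivalent to) the topology induced from the $I$-adic topology on $\mathbb{C}[X]^*$. Explicitly, with $\xi(X^n)=\delta_{n,1}$ and $\phi_1(X^n)=1$ for all $n$, the element $\big(\phi_1-\sum_{k=0}^n\frac{1}{k!}\xi^k+J^{n+1}\big)_{n\geq0}$ is a non-zero element of the kernel of $\widehat{\iota}$.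
   Context: Under $f\mapsto\sum_{k\geq0}f(X^k/k!)Z^k$, $\mathbb{C}[X]^*\cong\mathbb{C}[[Z]]$ as algebras and $I^n$ corresponds to $\langle Z^n\rangle$; the $I$-adic topology corresponds to the Krull topology. Powers $\xi^k$ are taken in the convolution product with $\xi^0$ the unit $\varepsilon$, $\varepsilon(X^n)=\delta_{n,0}$. *)

(* Defs.v *)
From mathcomp Require Import all_boot all_algebra.
From mathcomp Require Import complex Rstruct.
Set Implicit Arguments. Unset Strict Implicit. Unset Printing Implicit Defensive.
Import GRing.Theory Num.Theory.
Local Open Scope ring_scope.

Definition CC : numClosedFieldType := (Rdefinitions.R)[i].

(* Linear dual of C[X]: a functional f is determined by the values f(X^n). *)
Definition dual := nat -> CC.

Definition dual_eval (f : dual) (p : {poly CC}) : CC :=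
  \sum_(i < size p) p`_i * f i.

Definition dzero : dual := fun _ => 0.
Definition dadd (f g : dual) : dual := fun n => f n + g n.
Definition dopp (f : dual) : dual := fun n => - f n.
Definition dsub (f g : dual) : dual := fun n => f n - g n.
Definition dscale (c : CC) (f : dual) : dual := fun n => c * f n.

Definition conv (f g : dual) : dual :=
  fun n => \sum_(k < n.+1) 'C(n, k)%:R * f k * g (n - k)%N.

Definition eps : dual := fun n => (n == 0)%:R.

Fixpoint cpow (f : dual) (k : nat) : dual :=
  match k with 0 => eps | k'.+1 => conv (cpow f k') f end.

Definition poly_ideal (P : {poly CC} -> Prop) : Prop :=
  P 0 /\ (forall p q, P p -> P q -> P (p + q)) /\ (forall p q, P p -> P (q * p)).

Definition Co (f : dual) : Prop :=
  exists P : {poly CC} -> Prop, poly_ideal P /\ (exists p, P p /\ p != 0) /\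
    forall p, P p -> dual_eval f p = 0.

Definition Iid (f : dual) : Prop := f 0%N = 0.
Definition Jid (f : dual) : Prop := Iid f /\ Co f.
Definition Call (f : dual) : Prop := True.

(* n-th power of an ideal Id inside the subring Rg (of the convolution algebra):
   Id^0 = Rg, Id^(n+1) = additive closure of the products a * b, a in Id^n, b in Id. *)
Inductive idpow (Rg Id : dual -> Prop) : nat -> dual -> Prop :=
| idpow_ring f : Rg f -> idpow Rg Id 0 f
| idpow_zero n : idpow Rg Id n dzero
| idpow_add n f g : idpow Rg Id n f -> idpow Rg Id n g -> idpow Rg Id n (dadd f g)
| idpow_mul n f g : idpow Rg Id n f -> Id g -> idpow Rg Id n.+1 (conv f g).

Definition Ipow := idpow Call Iid.
Definition Jpow := idpow Co Jid.

(* Elements of the inverse limits, represented by compatible sequences of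
   representatives: x_n is the representative of the component in A/Id^n. *)
Definition limJ (a : nat -> dual) : Prop :=
  (forall n, Co (a n)) /\ (forall n, Jpow n (dsub (a n.+1) (a n))).
Definition eqJ (a b : nat -> dual) : Prop := forall n, Jpow n (dsub (a n) (b n)).
Definition limI (b : nat -> dual) : Prop := forall n, Ipow n (dsub (b n.+1) (b n)).
Definition eqI (a b : nat -> dual) : Prop := forall n, Ipow n (dsub (a n) (b n)).

(* The map iota-hat induced by the inclusion C[X]^o -> C[X]^*: on
   representatives it is the identity (x_n mod J^n  |->  x_n mod I^n). *)
Definition iota_hat (a : nat -> dual) : nat -> dual := a.

Definition sadd (a b : nat -> dual) : nat -> dual := fun n => dadd (a n) (b n).
Definition smul (a b : nat -> dual) : nat -> dual := fun n => conv (a n) (b n).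
Definition sscale (c : CC) (a : nat -> dual) : nat -> dual := fun n => dscale c (a n).
Definition sone : nat -> dual := fun _ => eps.
Definition szero : nat -> dual := fun _ => dzero.

Definition xi : dual := fun n => (n == 1%N)%:R.
Definition phi1 : dual := fun _ => 1.

(* The kernel element: the component in C[X]^o/J^(n+1) is
   phi_1 - sum_(k<=n) xi^k / k!; we index by the exponent m = n+1 of J^m,
   so  kerel m = phi_1 - sum_(k<m) xi^k/k!  (kerel 0 lies in C^o/J^0 = 0). *)
Definition kerel : nat -> dual :=
  fun m => dsub phi1 (fun i => \sum_(k < m) (k`!%:R)^-1 * cpow xi k i).

(* Main.v *)
Require Import Defs.
From mathcomp Require Import all_boot all_algebra.
From mathcomp Require Import complex Rstruct ring zify.
From Stdlib Require Import FunctionalExtensionality.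
Set Implicit Arguments. Unset Strict Implicit. Unset Printing Implicit Defensive.
Import GRing.Theory Num.Theory.
Local Open Scope ring_scope.

Definition Sh (f : dual) : dual := fun n => f n.+1.
Definition e (a : CC) (m : nat) : dual := fun n => ('C(n, m) * m`!)%:R * a ^+ (n - m).

Lemma e0 a m : e a m 0 = (m == 0%N)%:R.
Proof. by case: m => [|m]; rewrite /e ?bin0 ?fact0 ?expr0 ?mulr1 //= bin_small // mul0n mul0r. Qed.

Lemma eS a m n : e a m n.+1 = a * e a m n + m%:R * e a m.-1 n.
Proof.
case: m => [|m]; rewrite /e.
  by rewrite !bin0 fact0 !subn0 mul0r addr0 exprS; ring.
rewrite subSS binS factS /= natrM natrD !natrM.
case: (leqP n m) => H.
  rewrite (@bin_small n m.+1) ?ltnS //; ring.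
rewrite -(subnSK H) exprS; ring.
Qed.

Lemma conv0 f g : conv f g 0 = f 0%N * g 0%N.
Proof. by rewrite /conv big_ord1 bin0 mul1r subn0. Qed.

Lemma convS f g n : conv f g n.+1 = conv (Sh f) g n + conv f (Sh g) n.
Proof.
rewrite /conv /Sh big_ord_recl [X in _ = _ + X]big_ord_recl.
have H2 : \sum_(i < n.+1) ('C(n, i.+1))%:R * f i.+1 * g (n - i)%N =
          \sum_(i < n) ('C(n, i.+1))%:R * f i.+1 * g (n - i)%N.
  by rewrite big_ord_recr /= bin_small // mul0r mul0r addr0.
have H1 : \sum_(i < n.+1) ('C(n.+1, bump 0 i))%:R * f (bump 0 i) * g (n.+1 - bump 0 i)%N =
   \sum_(i < n.+1) ('C(n, i))%:R * f i.+1 * g (n - i)%N +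
   \sum_(i < n.+1) ('C(n, i.+1))%:R * f i.+1 * g (n - i)%N.
  rewrite -big_split; apply: eq_bigr => i _ /=.
  by rewrite /bump /= add1n subSS binS natrD; ring.
rewrite H1 H2 !bin0 !subn0 addrA [_ + \sum_(i < n.+1) _]addrC -!addrA; congr (_ + _).
congr (_ + _); apply: eq_bigr => i _ /=.
by rewrite /bump /= add1n subnSK.
Qed.

Lemma conv_sum2 (T U : Type) (s : seq T) (r : seq U) x y F G n :
  conv (fun k => \sum_(t <- s) x t * F t k) (fun k => \sum_(u <- r) y u * G u k) n =
  \sum_(t <- s) \sum_(u <- r) x t * y u * conv (F t) (G u) n.
Proof.
rewrite /conv /=.
under eq_bigr => k _ do rewrite -mulrA big_distrlr mulr_sumr.
under eq_bigr => k _ do under eq_bigr => t _ do rewrite mulr_sumr.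
rewrite exchange_big; apply: eq_bigr => t _ /=; rewrite exchange_big; apply: eq_bigr => u _ /=.
rewrite mulr_sumr; apply: eq_bigr => k _; ring.
Qed.

Lemma conv_e a m c k n : conv (e a m) (e c k) n = e (a + c) (m + k) n.
Proof.
elim: n m k => [|n IH] m k.
  by rewrite conv0 !e0 addn_eq0 -mulnb natrM.
rewrite convS eS.
have -> : Sh (e a m) = fun j => a * e a m j + m%:R * e a m.-1 j.
  by apply: functional_extensionality => j; rewrite /Sh eS.
have -> : Sh (e c k) = fun j => c * e c k j + k%:R * e c k.-1 j.
  by apply: functional_extensionality => j; rewrite /Sh eS.
have E1 : forall (F G : dual) x y h, conv (fun j => x * F j + y * G j) h n = x * conv F h n + y * conv G h n.
  move=> F G x y h; rewrite /conv mulr_sumr mulr_sumr -big_split; apply: eq_bigr => i _ /=; ring.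
have E2 : forall (F G : dual) x y h, conv h (fun j => x * F j + y * G j) n = x * conv h F n + y * conv h G n.
  move=> F G x y h; rewrite /conv mulr_sumr mulr_sumr -big_split; apply: eq_bigr => i _ /=; ring.
rewrite E1 E2 !IH.
have -> : m%:R * e (a + c) (m.-1 + k) n = m%:R * e (a + c) (m + k).-1 n.
  by case: m => [|m]; rewrite ?mul0r // addSn.
have -> : k%:R * e (a + c) (m + k.-1) n = k%:R * e (a + c) (m + k).-1 n.
  by case: k => [|k]; rewrite ?mul0r // addnS.
rewrite natrD; ring.
Qed.

Lemma de_bound f (p : {poly CC}) N : (size p <= N)%N ->
  dual_eval f p = \sum_(i < N) p`_i * f i.
Proof.
move=> H; rewrite /dual_eval (big_ord_widen N (fun i => p`_i * f i) H) big_mkcond /=.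
apply: eq_bigr => i _; case: ifP => // /negbT; rewrite -leqNgt => Hi.
by rewrite nth_default // mul0r.
Qed.

Lemma de_lin f c (p q : {poly CC}) : dual_eval f (c *: p + q) = c * dual_eval f p + dual_eval f q.
Proof.
set N := maxn (size p) (size q).
have Hp : (size p <= N)%N by rewrite leq_maxl.
have Hq : (size q <= N)%N by rewrite leq_maxr.
have Hs : (size (c *: p + q)%R <= N)%N.
  by apply: leq_trans (size_polyD _ _) _; rewrite geq_max (leq_trans (size_scale_leq _ _)).
rewrite (de_bound _ Hs) (de_bound _ Hp) (de_bound _ Hq) mulr_sumr -big_split.
by apply: eq_bigr => i _; rewrite coefD coefZ /= mulrDl mulrA.
Qed.

Lemma de0 f : dual_eval f 0 = 0.
Proof. by rewrite /dual_eval size_poly0 big_ord0. Qed.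

Lemma deD f (p q : {poly CC}) : dual_eval f (p + q) = dual_eval f p + dual_eval f q.
Proof. by rewrite -[p]scale1r de_lin mul1r scale1r. Qed.

Lemma deZ f c (p : {poly CC}) : dual_eval f (c *: p) = c * dual_eval f p.
Proof. by rewrite -[c *: p]addr0 de_lin de0 addr0. Qed.

Lemma deN f (p : {poly CC}) : dual_eval f (- p) = - dual_eval f p.
Proof. by rewrite -scaleN1r deZ mulN1r. Qed.

Lemma de_mulX f (p : {poly CC}) : dual_eval f (p * 'X) = dual_eval (Sh f) p.
Proof.
have Hs : (size (p * 'X)%R <= (size p).+1)%N.
  by apply: leq_trans (size_polyMleq _ _) _; rewrite size_polyX addn2.
rewrite (de_bound _ Hs) big_ord_recl coefMX /= mul0r add0r /dual_eval.
by apply: eq_bigr => i _; rewrite coefMX.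
Qed.

Lemma de1 f : dual_eval f 1 = f 0%N.
Proof. by rewrite /dual_eval size_poly1 big_ord1 coef1 mul1r. Qed.

Lemma deC f c : dual_eval f c%:P = c * f 0%N.
Proof. by rewrite -[c%:P]mulr1 mul_polyC deZ de1. Qed.

Lemma deXn f j : dual_eval f 'X^j = f j.
Proof.
elim: j f => [|j IH] f; first by rewrite expr0 de1.
by rewrite exprSr de_mulX IH.
Qed.

Definition act (p : {poly CC}) (f : dual) : dual := fun j => dual_eval f ('X^j * p).

Lemma act_Sh p f : act p (Sh f) = Sh (act p f).
Proof.
apply: functional_extensionality => j; rewrite /act /Sh -de_mulX.
by rewrite exprS; congr dual_eval; ring.
Qed.

Lemma M1 f (q p : {poly CC}) : dual_eval f (q * p) = dual_eval (act p f) q.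
Proof.
elim/poly_ind: q f => [|q c IH] f; first by rewrite mul0r !de0.
rewrite mulrDl deD -mulrA (mulrC 'X) mulrA de_mulX IH deD de_mulX act_Sh.
by rewrite !deC /act expr0 mul1r mul_polyC deZ.
Qed.

Lemma act_mul p q f : act (p * q) f = act p (act q f).
Proof.
by apply: functional_extensionality => j; rewrite /act mulrA M1.
Qed.

Lemma act_XsubC a f : act ('X - a%:P) f = fun n => f n.+1 - a * f n.
Proof.
apply: functional_extensionality => j; rewrite /act mulrBr -exprSr deD deN.
by rewrite (mulrC (_ ^+ j)) mul_polyC deZ !deXn.
Qed.

Lemma act_lin c p q f : act (c *: p + q) f = fun n => c * act p f n + act q f n.
Proof.
apply: functional_extensionality => j; rewrite /act mulrDr -scalerAr de_lin //.
Qed.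

Lemma act_C c f : act c%:P f = fun n => c * f n.
Proof.
apply: functional_extensionality => j; rewrite /act mulrC mul_polyC deZ deXn //.
Qed.

Lemma act1 f : act 1 f = f.
Proof. by rewrite -[1]/(1%:P) act_C; apply: functional_extensionality => j; rewrite mul1r. Qed.

Lemma act_sum (T : Type) p (s : seq T) x F :
  act p (fun n => \sum_(t <- s) x t * F t n) = fun n => \sum_(t <- s) x t * act p (F t) n.
Proof.
apply: functional_extensionality => j; rewrite /act /dual_eval.
under eq_bigr do rewrite mulr_sumr.
rewrite exchange_big /=; apply: eq_bigr => t _; rewrite mulr_sumr.
by apply: eq_bigr => i _; ring.
Qed.

Lemma act_zero p : act p (fun _ => 0) = fun _ => 0.
Proof.
apply: functional_extensionality => j; rewrite /act /dual_eval big1 // => i _; exact: mulr0.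
Qed.

Notation term := (CC * CC * nat)%type.
Definition ev (L : seq term) : dual := fun n => \sum_(t <- L) t.1.1 * e t.1.2 t.2 n.
Definition W (L : seq term) : CC := \sum_(t <- L) (t.2 == 0%N)%:R * t.1.1 * t.1.2.
Definition sc (k : CC) (t : term) : term := (k * t.1.1, t.1.2, t.2).
Definition prodL (L1 L2 : seq term) : seq term :=
  [seq (t.1.1 * u.1.1, t.1.2 + u.1.2, (t.2 + u.2)%N) | t <- L1, u <- L2].

Lemma ev_nil : ev [::] = fun _ => 0.
Proof. by apply: functional_extensionality => n; rewrite /ev big_nil. Qed.

Lemma ev_cons t L : ev (t :: L) = fun n => t.1.1 * e t.1.2 t.2 n + ev L n.
Proof. by apply: functional_extensionality => n; rewrite /ev big_cons. Qed.

Lemma ev_cat L1 L2 : ev (L1 ++ L2) = fun n => ev L1 n + ev L2 n.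
Proof. by apply: functional_extensionality => n; rewrite /ev big_cat. Qed.

Lemma ev_sc k L : ev (map (sc k) L) = fun n => k * ev L n.
Proof.
apply: functional_extensionality => n; rewrite /ev big_map mulr_sumr.
by apply: eq_bigr => t _; rewrite /sc /= mulrA.
Qed.

Lemma ev0 L : ev L 0%N = \sum_(t <- L) (t.2 == 0%N)%:R * t.1.1.
Proof. by rewrite /ev; apply: eq_bigr => t _; rewrite e0 mulrC. Qed.

Lemma ev_prod L1 L2 : ev (prodL L1 L2) = conv (ev L1) (ev L2).
Proof.
apply: functional_extensionality => n; rewrite /ev (conv_sum2 L1 L2 (fun t : term => t.1.1) (fun t : term => t.1.1) (fun t : term => e t.1.2 t.2) (fun u : term => e u.1.2 u.2)) /prodL big_allpairs_dep.
by apply: eq_bigr => t _; apply: eq_bigr => u _; rewrite conv_e.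
Qed.

Lemma W_cat L1 L2 : W (L1 ++ L2) = W L1 + W L2.
Proof. by rewrite /W big_cat. Qed.

Lemma W_sc k L : W (map (sc k) L) = k * W L.
Proof. by rewrite /W big_map mulr_sumr; apply: eq_bigr => t _; rewrite /sc /=; ring. Qed.

Lemma W_prod L1 L2 : W (prodL L1 L2) = W L1 * ev L2 0%N + ev L1 0%N * W L2.
Proof.
rewrite /W /prodL big_allpairs_dep !ev0 !big_distrl /= -big_split /=.
apply: eq_bigr => t _; rewrite !big_distrr -big_split /=; apply: eq_bigr => u _ /=.
rewrite addn_eq0 -mulnb natrM; ring.
Qed.

Definition D (z : CC) (f : dual) : dual := fun n => f n.+1 - z * f n.

Lemma act_XsubC' z f : act ('X - z%:P) f = D z f.
Proof. exact: act_XsubC. Qed.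

Lemma D_e z a m : D z (e a m) = fun n => (a - z) * e a m n + m%:R * e a m.-1 n.
Proof. by apply: functional_extensionality => n; rewrite /D eS; ring. Qed.

Lemma D_ev z L : D z (ev L) = fun n => \sum_(t <- L) t.1.1 * D z (e t.1.2 t.2) n.
Proof.
apply: functional_extensionality => n; rewrite /D /ev mulr_sumr -sumrB.
by apply: eq_bigr => t _; ring.
Qed.

Lemma natS_neq0 m : (m.+1)%:R != 0 :> CC.
Proof. by rewrite pnatr_eq0. Qed.

Lemma pre_e z a m : exists L, D z (ev L) = e a m.
Proof.
have [->|Haz] := eqVneq a z.
  exists [:: ((m.+1)%:R^-1, z, m.+1)]; rewrite D_ev.
  apply: functional_extensionality => n; rewrite big_cons big_nil D_e /= subrr mul0r add0r addr0.
  by rewrite mulrA mulVf ?mul1r // natS_neq0.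
have Haz' : a - z != 0 by rewrite subr_eq0.
elim: m => [|m [L0 HL0]].
  exists [:: ((a - z)^-1, a, 0%N)]; rewrite D_ev.
  apply: functional_extensionality => n; rewrite big_cons big_nil D_e /= mul0r !addr0.
  by rewrite mulrA mulVf ?mul1r.
exists (((a - z)^-1, a, m.+1) :: map (sc (- (m.+1)%:R / (a - z))) L0).
rewrite ev_cons.
have -> : D z (fun n => ((a - z)^-1, a, m.+1).1.1 * e ((a - z)^-1, a, m.+1).1.2 ((a - z)^-1, a, m.+1).2 n + ev [seq sc (- (m.+1)%:R / (a - z)) i | i <- L0] n)
  = fun n => (a - z)^-1 * D z (e a m.+1) n + (- (m.+1)%:R / (a - z)) * D z (ev L0) n.
  by apply: functional_extensionality => n; rewrite /D ev_sc /=; ring.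
rewrite HL0 D_e; apply: functional_extensionality => n /=.
field; exact: Haz'.
Qed.

Lemma D_cat z L1 L2 : D z (ev (L1 ++ L2)) = fun n => D z (ev L1) n + D z (ev L2) n.
Proof. by rewrite ev_cat; apply: functional_extensionality => n; rewrite /D; ring. Qed.

Lemma D_sc z k L : D z (ev (map (sc k) L)) = fun n => k * D z (ev L) n.
Proof. by rewrite ev_sc; apply: functional_extensionality => n; rewrite /D; ring. Qed.

Lemma pre z L1 : exists L2, D z (ev L2) = ev L1.
Proof.
elim: L1 => [|t L1 [L' HL']]; first by exists [::]; rewrite ev_nil; apply: functional_extensionality => n; rewrite /D /= mulr0 subr0.
have [L HL] := pre_e z t.1.2 t.2.
exists (map (sc t.1.1) L ++ L'); rewrite D_cat D_sc HL HL' ev_cons //.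
Qed.

Lemma act_scale p c f : act p (fun n => c * f n) = fun n => c * act p f n.
Proof.
apply: functional_extensionality => j; rewrite /act /dual_eval mulr_sumr.
by apply: eq_bigr => i _; ring.
Qed.

Lemma act_e a m : act (('X - a%:P)^+ m.+1) (e a m) = fun _ => 0.
Proof.
elim: m => [|m IH].
  rewrite expr1 act_XsubC' D_e; apply: functional_extensionality => n.
  ring.
rewrite exprSr act_mul act_XsubC' D_e.
have -> : (fun n => (a - a) * e a m.+1 n + (m.+1)%:R * e a m.+1.-1 n) = fun n => (m.+1)%:R * e a m n.
  by apply: functional_extensionality => n; rewrite subrr mul0r add0r.
by rewrite act_scale IH; apply: functional_extensionality => n; rewrite mulr0.
Qed.

Lemma de_zero (q : {poly CC}) : dual_eval (fun _ => 0) q = 0.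
Proof. by rewrite /dual_eval big1 // => i _; rewrite mulr0. Qed.

Lemma Co_of_act p f : p != 0 -> act p f = (fun _ => 0) -> Co f.
Proof.
move=> Hp Ha; exists (fun q => exists r, q = r * p); split; [|split].
- split; first by exists 0; rewrite mul0r.
  split; first by move=> q1 q2 [r1 ->] [r2 ->]; exists (r1 + r2); rewrite mulrDl.
  by move=> q1 q2 [r1 ->]; exists (q2 * r1); rewrite mulrA.
- by exists p; split => //; exists 1; rewrite mul1r.
- by move=> q [r ->]; rewrite M1 Ha de_zero.
Qed.

Lemma act_of_Co f : Co f -> exists p, p != 0 /\ act p f = fun _ => 0.
Proof.
move=> [P [[P0 [PD PM]] [[p [Pp Hp]] Hv]]].
exists p; split => //; apply: functional_extensionality => j.
by rewrite /act; apply: Hv; apply: PM.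
Qed.

Lemma ev_Co L : Co (ev L).
Proof.
pose p := \prod_(t <- L) ('X - t.1.2%:P)^+ t.2.+1.
apply: (@Co_of_act p).
  apply: monic_neq0; apply: monic_prod => t _; apply: monic_exp; exact: monicXsubC.
rewrite /ev (act_sum p L (fun t : term => t.1.1) (fun t : term => e t.1.2 t.2)).
apply: functional_extensionality => n; rewrite big_seq big1 // => t Ht.
rewrite /p (big_rem t Ht) /= (mulrC (_ ^+ _)) act_mul act_e act_zero mulr0 //.
Qed.

Lemma e_0 z n : e z 0 n = z ^+ n.
Proof. by rewrite /e bin0 fact0 subn0 mul1n mul1r. Qed.

Lemma geo z (h : dual) : (forall n, h n.+1 - z * h n = 0) -> h = fun n => h 0%N * e z 0 n.
Proof.
move=> H; apply: functional_extensionality => n; rewrite e_0.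
elim: n => [|n IH]; first by rewrite expr0 mulr1.
by move/eqP: (H n); rewrite subr_eq0 => /eqP ->; rewrite IH exprS; ring.
Qed.

Lemma Co_ev_aux (r : seq CC) : forall f,
  act (\prod_(z <- r) ('X - z%:P)) f = (fun _ => 0) -> exists L, f = ev L.
Proof.
elim: r => [|z r IH] f.
  by rewrite big_nil act1 => ->; exists [::]; rewrite ev_nil.
rewrite big_cons mulrC act_mul act_XsubC' => /IH [L1 HL1].
have [L2 HL2] := pre z L1.
set h := fun n => f n - ev L2 n.
have Hh : forall n, h n.+1 - z * h n = 0.
  move=> n; have := congr1 (fun g => g n) HL2; rewrite -HL1 /D /h /= => E.
  rewrite /h /=.
  have -> : f n.+1 - ev L2 n.+1 - z * (f n - ev L2 n) = (f n.+1 - z * f n) - (ev L2 n.+1 - z * ev L2 n) by ring.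
  by rewrite E subrr.
exists (L2 ++ [:: (h 0%N, z, 0%N)]); rewrite ev_cat ev_cons ev_nil /=.
apply: functional_extensionality => n.
have := congr1 (fun g => g n) (geo Hh); rewrite /h /= => <-; ring.
Qed.

Lemma Co_ev f : Co f -> exists L, f = ev L.
Proof.
move=> /act_of_Co [p [Hp Ha]].
have [r Hr] := closed_field_poly_normal p.
apply: (@Co_ev_aux r).
have Hl : lead_coef p != 0 by rewrite lead_coef_eq0.
move: Ha; rewrite {1}Hr -[_ *: _]addr0 act_lin => Ha.
apply: functional_extensionality => n; have := congr1 (fun g => g n) Ha => /=.
rewrite /act mulr0 de0 addr0 => /eqP; rewrite mulf_eq0 (negbTE Hl) /= => /eqP //.
Qed.

Lemma Co_iff f : Co f <-> exists L, f = ev L.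
Proof. by split; [exact: Co_ev | move=> [L ->]; exact: ev_Co]. Qed.

Lemma cop_prod (M : nat) (b : CC) (s : seq CC) : b \notin s ->
  coprimep (\prod_(a <- s) ('X - a%:P)^+M) (('X - b%:P)^+M).
Proof.
elim: s => [|a s IH]; first by rewrite big_nil coprime1p.
rewrite in_cons negb_or => /andP [Hba Hs].
rewrite big_cons coprimepMl IH // andbT.
apply: coprimep_expl; apply: coprimep_expr; apply: coprimep_XsubC2.
by rewrite subr_eq0.
Qed.

Lemma dvd_prod (M : nat) (a : CC) (s : seq CC) : a \in s ->
  ('X - a%:P)^+M %| \prod_(x <- s) ('X - x%:P)^+M.
Proof. by move=> Ha; rewrite (big_rem a Ha) /=; apply: dvdp_mulr; exact: dvdpp. Qed.

Lemma crt (M : nat) (s : seq CC) : uniq s ->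
  exists T : {poly CC}, forall a, a \in s -> ('X - a%:P)^+M %| T - a%:P.
Proof.
elim: s => [|b s IH]; first by exists 0.
move=> /= /andP [Hb /IH [T' HT']].
set U := \prod_(a <- s) ('X - a%:P)^+M.
have /Bezout_eq1_coprimepP [[u1 u2] /= Hu] := cop_prod M Hb.
exists (T' + u1 * U * (b%:P - T')) => a; rewrite in_cons => /orP [/eqP ->|Ha].
  have -> : T' + u1 * U * (b%:P - T') - b%:P = (- (u2 * (b%:P - T'))) * ('X - b%:P)^+M.
    have -> : u1 * U = 1 - u2 * ('X - b%:P)^+M by rewrite -Hu addrK.
    ring.
  by apply: dvdp_mull; exact: dvdpp.
have -> : T' + u1 * U * (b%:P - T') - a%:P = (T' - a%:P) + (u1 * U) * (b%:P - T') by ring.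
apply: dvdp_add; first exact: HT'.
by apply: dvdp_mulr; apply: dvdp_mull; exact: dvd_prod.
Qed.

Lemma act_T (T : {poly CC}) a m M : (m < M)%N -> ('X - a%:P)^+M %| T - a%:P ->
  act T (e a m) = fun n => a * e a m n.
Proof.
move=> HmM /dvdpP [Q HQ].
have -> : T = 1 *: a%:P + (Q * ('X - a%:P)^+(M - m.+1)) * ('X - a%:P)^+m.+1.
  by rewrite -mulrA -exprD subnK // -HQ scale1r; ring.
rewrite act_lin act_mul act_e act_zero act_C.
by apply: functional_extensionality => n; rewrite mul1r addr0.
Qed.

Lemma K L L' : ev L = ev L' -> W L = W L'.
Proof.
move=> HL.
set s := undup (map (fun t : term => t.1.2) (L ++ L')).
set M := (\sum_(t <- L ++ L') t.2.+1)%N.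
have [T HT] := crt M (undup_uniq (map (fun t : term => t.1.2) (L ++ L'))).
have key : forall L0, {subset L0 <= L ++ L'} -> act T (ev L0) 0%N = W L0.
  move=> L0 Hsub.
  rewrite /ev (act_sum T L0 (fun t : term => t.1.1) (fun t : term => e t.1.2 t.2)) /W.
  rewrite big_seq [RHS]big_seq; apply: eq_bigr => t Ht.
  have Ht' := Hsub t Ht.
  rewrite (@act_T T t.1.2 t.2 M).
  - by rewrite e0; ring.
  - by rewrite /M (big_rem t Ht') /= leq_addr.
  - by apply: HT; rewrite mem_undup; apply: map_f.
rewrite -key; last by move=> t Ht; rewrite mem_cat Ht.
rewrite -key; last by move=> t Ht; rewrite mem_cat Ht orbT.
by rewrite HL.
Qed.

Lemma conv_xi g n : conv g xi n = n%:R * g n.-1.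
Proof.
case: n => [|n]; first by rewrite conv0 /xi /= mul0r mulr0.
rewrite /conv big_ord_recr /= subnn /xi /= mulr0 addr0.
rewrite big_ord_recr /= subSnn /= mulr1 binSn big1 ?add0r // => i _.
have Hi := ltn_ord i.
have -> : (n.+1 - i == 1)%N = false by apply/eqP; lia.
by rewrite mulr0.
Qed.

Lemma cpow_xi k n : cpow xi k n = (n == k)%:R * (k`!)%:R.
Proof.
elim: k n => [|k IH] n; first by rewrite /= /eps fact0; ring.
rewrite /= conv_xi IH; case: n => [|n] /=; first by rewrite !mul0r.
rewrite eqSS factS natrM; case: eqP => [->|_] /=; ring.
Qed.

Definition divX (f : dual) : dual := fun j => f j.+1 / (j.+1)%:R.

Lemma divX_xi f : f 0%N = 0 -> conv (divX f) xi = f.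
Proof.
move=> H0; apply: functional_extensionality => n; rewrite conv_xi.
case: n => [|n]; first by rewrite mul0r H0.
by rewrite /divX /= mulrC -mulrA mulVf ?mulr1 // natS_neq0.
Qed.

Lemma vanish_Ipow n f : (forall k, (k < n)%N -> f k = 0) -> Ipow n f.
Proof.
elim: n f => [|n IH] f Hf; first by apply: idpow_ring.
rewrite -(divX_xi (Hf 0%N isT)); apply: idpow_mul.
  by apply: IH => k Hk; rewrite /divX Hf ?mul0r.
by rewrite /Iid /xi.
Qed.

Lemma Ipow_vanish n f : Ipow n f -> forall k, (k < n)%N -> f k = 0.
Proof.
elim => {n f} [f _|n|n f g _ IHf _ IHg|n f g _ IHf Hg] k.
- by [].
- by move=> _; rewrite /dzero.
- by move=> Hk; rewrite /dadd IHf // IHg // addr0.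
- move=> Hk; rewrite /conv big1 // => i _.
  have := leq_ord i; rewrite leq_eqVlt => /orP [/eqP Hi|Hi].
    by rewrite Hi subnn Hg mulr0.
  by rewrite IHf ?mulr0 ?mul0r // (leq_trans Hi).
Qed.

Lemma finsupp_Co N f : (forall k, (N <= k)%N -> f k = 0) -> Co f.
Proof.
move=> Hf; apply: (@Co_of_act ('X^N)); first by rewrite monic_neq0 // monicXn.
apply: functional_extensionality => j; rewrite /act -exprD deXn Hf //.
by rewrite leq_addl.
Qed.

Lemma Lfin n N f : (forall k, (N <= k)%N -> f k = 0) -> (forall k, (k < n)%N -> f k = 0) -> Jpow n f.
Proof.
elim: n N f => [|n IH] N f HN Hf; first by apply: idpow_ring; exact: finsupp_Co HN.
rewrite -(divX_xi (Hf 0%N isT)); apply: idpow_mul.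
  apply: (IH N).
    by move=> k Hk; rewrite /divX HN ?mul0r // (leq_trans Hk).
  by move=> k Hk; rewrite /divX Hf ?mul0r.
split; first by rewrite /Iid /xi.
by apply: (@finsupp_Co 2) => k Hk; rewrite /xi; case: k Hk => [|[|k]].
Qed.

Lemma conv_loc f f' g g' k : (forall j, (j <= k)%N -> f j = f' j /\ g j = g' j) ->
  conv f g k = conv f' g' k.
Proof.
move=> H; apply: eq_bigr => i _.
have [-> _] := H i (leq_ord i).
by have [_ ->] := H (k - i)%N (leq_subr _ _).
Qed.

Lemma conv_fin N f g k : (forall j, (N <= j)%N -> f j = 0) -> (forall j, (N <= j)%N -> g j = 0) ->
  (N + N <= k)%N -> conv f g k = 0.
Proof.
move=> Hf Hg Hk; apply: big1 => i _.
case: (leqP N i) => Hi; first by rewrite Hf ?mulr0 ?mul0r.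
rewrite Hg ?mulr0 //.
by rewrite leq_subRL ?(leq_trans _ Hk) ?(leq_trans (ltnW Hi)) ?leq_addr // ?leq_add // ltnW.
Qed.

Lemma Jpow_main n f : Jpow n f ->
  Co f /\ Ipow n f /\ ((0 < n)%N -> f 0%N = 0) /\ ((1 < n)%N -> forall L, f = ev L -> W L = 0).
Proof.
elim => {n f} [f Hf|n|n f g _ [Cf [If [Vf Wf]]] _ [Cg [Ig [Vg Wg]]]|n f g _ [Cf [If [Vf Wf]]] [Hg0 Cg]].
- by split => //; split => //; apply: idpow_ring.
- have Hz : dzero = ev [::] by rewrite ev_nil.
  split; first by rewrite Hz; apply: ev_Co.
  split; first exact: idpow_zero.
  split => // _ L HL; rewrite (@K L [::]) ?HL -?Hz //.
  by rewrite /W big_nil.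
- have [Lf HLf] := Co_ev Cf; have [Lg HLg] := Co_ev Cg.
  have Hs : dadd f g = ev (Lf ++ Lg) by rewrite ev_cat HLf HLg.
  split; first by rewrite Hs; apply: ev_Co.
  split; first exact: idpow_add.
  split; first by move=> Hn; rewrite /dadd Vf // Vg // addr0.
  move=> Hn L HL; by rewrite (@K L (Lf ++ Lg)) -?HL -?Hs // W_cat Wf // Wg // addr0.
- have [Lf HLf] := Co_ev Cf; have [Lg HLg] := Co_ev Cg.
  have Hs : conv f g = ev (prodL Lf Lg) by rewrite ev_prod HLf HLg.
  split; first by rewrite Hs; apply: ev_Co.
  split; first by apply: idpow_mul.
  split; first by move=> _; rewrite conv0 Hg0 mulr0.
  move=> Hn L HL; rewrite (@K L (prodL Lf Lg)) -?HL -?Hs // W_prod.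
  rewrite -HLf -HLg Hg0 Vf //; ring.
Qed.

Definition Lk (m : nat) : seq term :=
  (1, 1, 0%N) :: [seq (- (k`!%:R)^-1, 0, k) | k <- iota 0 m].

Lemma sum_eq (m n : nat) : \sum_(k < m) (n == k)%:R = (n < m)%:R :> CC.
Proof.
elim: m => [|m IH]; first by rewrite big_ord0.
rewrite big_ord_recr /= IH.
have -> : (n < m.+1)%N = ((n < m) || (n == m))%N by rewrite ltnS leq_eqVlt orbC.
case: (ltngtP n m) => H /=; rewrite ?addr0 ?add0r //.
Qed.

Lemma kerel_val m n : kerel m n = 1 - (n < m)%:R.
Proof.
rewrite /kerel /dsub /phi1 -sum_eq; congr (_ - _); apply: eq_bigr => k _.
by rewrite cpow_xi mulrA mulrC mulrA mulfV ?mul1r // pnatr_eq0 -lt0n fact_gt0.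
Qed.

Lemma e_00 k n : e 0 k n = (n == k)%:R * (k`!)%:R.
Proof.
rewrite /e; case: (ltngtP n k) => H.
- by rewrite bin_small // mul0n mul0r mul0r.
- rewrite expr0n; have -> : (n - k == 0)%N = false by apply/negbTE; rewrite subn_eq0 -ltnNge.
  by rewrite mulr0 mul0r.
- by rewrite H binn subnn expr0 mulr1 mul1n /= mul1r.
Qed.

Lemma kerel_ev m : kerel m = ev (Lk m).
Proof.
apply: functional_extensionality => n; rewrite kerel_val ev_cons /= e_0 expr1n mulr1 -sum_eq.
congr (_ + _).
rewrite /ev big_map (_ : iota 0 m = index_iota 0 m); last by rewrite /index_iota subn0.
rewrite big_mkord -sumrN; apply: eq_bigr => k _ /=; rewrite e_00.
rewrite mulrCA mulNr mulVf ?mulrN1 // pnatr_eq0 -lt0n fact_gt0 //.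
Qed.

Lemma W_Lk m : W (Lk m) = 1.
Proof.
rewrite /W big_cons /= big_map big1 ?addr0 => [|k _]; last by rewrite mulr0.
by rewrite !mulr1.
Qed.

Lemma Co_kerel m : Co (kerel m).
Proof. by rewrite kerel_ev; exact: ev_Co. Qed.

Lemma kerel_notJ2 m : ~ Jpow 2 (kerel m).
Proof.
move=> /Jpow_main [_ [_ [_ HW]]].
have := HW isT (Lk m) (kerel_ev m); rewrite W_Lk => /eqP; rewrite oner_eq0 //.
Qed.

Definition sect (b : nat -> dual) : nat -> dual := fun n k => if (k < n)%N then b n k else 0.

Lemma ifge (T : Type) n k (x y : T) : (n <= k)%N -> (if (k < n)%N then x else y) = y.
Proof. by move=> H; rewrite ltnNge H. Qed.

Lemma iflt (T : Type) n k (x y : T) : (k < n)%N -> (if (k < n)%N then x else y) = x.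
Proof. by move=> H; rewrite H. Qed.

Lemma part1 :
  (exists s : (nat -> dual) -> (nat -> dual),
      (forall b, limI b -> limJ (s b)) /\
      (forall b b', limI b -> limI b' -> eqI b b' -> eqJ (s b) (s b')) /\
      (forall b, limI b -> eqI (iota_hat (s b)) b) /\
      (forall b b', limI b -> limI b' -> eqJ (s (sadd b b')) (sadd (s b) (s b'))) /\
      (forall b b', limI b -> limI b' -> eqJ (s (smul b b')) (smul (s b) (s b'))) /\
      (forall c b, limI b -> eqJ (s (sscale c b)) (sscale c (s b))) /\
      eqJ (s sone) sone).
Proof.
exists sect; split; [|split; [|split; [|split; [|split; [|split]]]]].
- move=> b Hb; split.
    by move=> n; apply: (@finsupp_Co n) => k Hk; rewrite /sect ltnNge Hk.
  move=> n; apply: (@Lfin n n.+1) => k Hk; rewrite /dsub /sect.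
    by rewrite !ifge ?subrr // ltnW.
  by rewrite !iflt //; [apply: (Ipow_vanish (Hb n)) | apply: ltnW].
- move=> b b' _ _ H n; apply: (@Lfin n n) => k Hk; rewrite /dsub /sect.
    by rewrite ltnNge Hk subrr.
  by rewrite Hk; apply: (Ipow_vanish (H n)).
- by move=> b _ n; apply: vanish_Ipow => k Hk; rewrite /iota_hat /dsub /sect Hk subrr.
- move=> b b' _ _ n; apply: (@Lfin n n) => k Hk; rewrite /dsub /sect /sadd /dadd.
    by rewrite ltnNge Hk /= addr0 subrr.
  by rewrite Hk subrr.
- move=> b b' _ _ n; apply: (@Lfin n (n + n)) => k Hk; rewrite /dsub /sect /smul.
    rewrite ifF; last by apply/negbTE; rewrite -leqNgt (leq_trans _ Hk) // leq_addr.
    rewrite (@conv_fin n) ?subrr // => j Hj; by rewrite ltnNge Hj.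
  rewrite Hk; apply/eqP; rewrite subr_eq0; apply/eqP; apply: conv_loc => j Hj.
  by rewrite (leq_ltn_trans Hj Hk).
- move=> c b _ n; apply: (@Lfin n n) => k Hk; rewrite /dsub /sect /sscale /dscale.
    by rewrite ltnNge Hk /= mulr0 subrr.
  by rewrite Hk subrr.
- move=> n; apply: (@Lfin n n.+1) => k Hk; rewrite /dsub /sect /sone.
    by rewrite ifge; [rewrite /eps; case: k Hk => // k _; rewrite /= subrr | exact: ltnW].
  by rewrite Hk subrr.
Qed.

Lemma part5 : limJ kerel /\ eqI (iota_hat kerel) szero /\ ~ eqJ kerel szero.
Proof.
split; [split|split].
- by move=> n; exact: Co_kerel.
- move=> n; apply: (@Lfin n n.+1) => k Hk; rewrite /dsub !kerel_val.
    have h1 : (k < n.+1)%N = false by apply/negbTE; rewrite -leqNgt.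
    have h2 : (k < n)%N = false by apply/negbTE; rewrite -leqNgt ltnW.
    by rewrite h1 h2 subrr.
  have h2 : (k < n.+1)%N by rewrite ltnS ltnW.
  by rewrite Hk h2 subrr.
- move=> n; apply: vanish_Ipow => k Hk.
  by rewrite /iota_hat /dsub /szero /dzero kerel_val Hk subrr subr0.
- move=> H; have H2 := H 2%N.
  have E : dsub (kerel 2%N) (szero 2%N) = kerel 2%N.
    by apply: functional_extensionality => k; rewrite /dsub /szero /dzero subr0.
  rewrite /iota_hat E in H2; exact: (kerel_notJ2 H2).
Qed.

Theorem mainTheorem5 :
  (* iota-hat is a split surjection: an algebra section s of iota-hat *)
  (exists s : (nat -> dual) -> (nat -> dual),
      (forall b, limI b -> limJ (s b)) /\
      (forall b b', limI b -> limI b' -> eqI b b' -> eqJ (s b) (s b')) /\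
      (forall b, limI b -> eqI (iota_hat (s b)) b) /\
      (forall b b', limI b -> limI b' -> eqJ (s (sadd b b')) (sadd (s b) (s b'))) /\
      (forall b b', limI b -> limI b' -> eqJ (s (smul b b')) (smul (s b) (s b'))) /\
      (forall c b, limI b -> eqJ (s (sscale c b)) (sscale c (s b))) /\
      eqJ (s sone) sone) /\
  (* iota-hat is not injective *)
  (exists a, limJ a /\ eqI (iota_hat a) szero /\ ~ eqJ a szero) /\
  (* the J-adic topology on C^o is finer than the one induced from the I-adic one *)
  (forall n f, Jpow n f -> Co f /\ Ipow n f) /\
  (* ... and not equivalent to it *)
  (exists n, forall m, ~ (forall f, Co f -> Ipow m f -> Jpow n f)) /\
  (* the explicit element is a non-zero element of the kernel of iota-hat *)
  (limJ kerel /\ eqI (iota_hat kerel) szero /\ ~ eqJ kerel szero).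
Proof.
split; first exact: part1.
split; first by exists kerel; exact: part5.
split; first by move=> n f /Jpow_main [? [? _]].
split; last exact: part5.
exists 2%N => m H.
have HJ : Jpow 2 (kerel m).
  apply: H; first exact: Co_kerel.
  by apply: vanish_Ipow => k Hk; rewrite kerel_val Hk subrr.
exact: (kerel_notJ2 HJ).
Qed.
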